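(* Let $(L,\le,\bot,\top)$ be a complete lattice and $(\&_i,\swarrow^i,\nwarrow_i)$, $i=1,\dots,n$, adjoint triples on $L$ with $x\,\&_i\,\top=\top\,\&_i\,x=x$ for all $x\in L$ and all $i$. Let $(A,B,R,\sigma)$ be a normalized context having a decomposition into independent subcontexts $\{(A_\lambda,B_\lambda,R_\lambda,\sigma_\lambda)\mid\lambda\in\Lambda\}$. Let $\lambda\in\Lambda$, $a\in A_\lambda$ and $x\in L\setminus\{\bot\}$. Then for all $b\in B$, $$\phi_{a,x}^\downarrow(b)=\begin{cases}R(a,b)\nwarrow_{\sigma(a,b)}x & \text{if } b\in B_\lambda,\\ \bot&\text{otherwise.}\end{cases}$$
   Context: An adjoint triple on $L$ is a triple of maps $\&,\swarrow,\nwarrow\colon L\times L\to L$ with $x\le z\swarrow y\iff x\& y\le z\iff y\le z\nwarrow x$. A context is $(A,B,R,\sigma)$ with $A,B$ non-empty sets, $R\colon A\times B\to L$, $\sigma\colon A\times B\to\{1,\dots,n\}$; it is normalized if every $a\in A$ has $b_1,b_2$ with $R(a,b_1)\ne\bot$, $R(a,b_2)=\bot$, and every $b\in B$ has $a_1,a_2$ with $R(a_1,b)\neq\bot$, $R(a_2,b)=\bot$. For $f\colon A\to L$, $f^\downarrow(b)=\inf_{a\in A}R(a,b)\nwarrow_{\sigma(a,b)}f(a)$. The fuzzy-attribute $\phi_{a,x}\colon A\to L$ takes value $x$ at $a$ and $\bot$ elsewhere. A separable subcontext is a tuple $(Y,X,R_{Y\times X},\sigma_{Y\times X})$ (restrictions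 of $R,\sigma$) with $Y\subsetneq A$, $X\subsetneq B$ non-empty, some $a\in Y,b\in X$ with $R(a,b)\ne\bot$, $R(a,b')=\bot$ for all $(a,b')\in Y\times(B\setminus X)$, and $R(a',b)=\bot$ for all $(a',b)\in(A\setminus Y)\times X$. An operator $\&$ has zero-divisors if $x\&y=\bot$ for some $x\ne\bot$, $y\neq\bot$. The context has a decomposition into independent subcontexts $\{(A_\lambda,B_\lambda,R_\lambda,\sigma_\lambda)\mid\lambda\in\Lambda\}$ ($\Lambda$ non-empty, $R_\lambda,\sigma_\lambda$ restrictions to $A_\lambda\times B_\lambda$) if each tuple is a separable subcontext, the $A_\lambda$ are pairwise disjoint with union $A$, the $B_\lambda$ are pairwise disjoint with union $B$, and for every $\lambda$ and every $(a,b)\in((A\setminus A_\lambda)\times B_\lambda)\cup(A_\lambda\times(B\setminus B_\lambda))$ the conjunctor $\&_{\sigma(a,b)}$ has no zero-divisors. *)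

(* Defs.v *)
From HB Require Import structures.
From mathcomp Require Import all_boot all_order.
Set Implicit Arguments. Unset Strict Implicit. Unset Printing Implicit Defensive.
Import Order.TTheory.
Local Open Scope order_scope.

Section Defs.
Context {d : Order.disp_t} {L : tbLatticeType d}.

Definition is_glb (S : L -> Prop) (m : L) : Prop :=
  (forall y, S y -> m <= y) /\ (forall z, (forall y, S y -> z <= y) -> z <= m).

Definition complete_inf (inf : (L -> Prop) -> L) : Prop :=
  forall S, is_glb S (inf S).

(* (conj, sw, nw) is an adjoint triple on L:
   x <= z sw y  <->  conj x y <= z  <->  y <= z nw x  (here "z sw y" = sw z y) *)
Definition adjoint_triple (conj sw nw : L -> L -> L) : Prop :=
  forall x y z, (x <= sw z y <-> conj x y <= z) /\ (conj x y <= z <-> y <= nw z x).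

Definition has_zero_divisors (conj : L -> L -> L) : Prop :=
  exists x y, x <> \bot /\ y <> \bot /\ conj x y = \bot.

Variables (n : nat) (A : eqType) (B : Type).
Variables (R : A -> B -> L) (sigma : A -> B -> 'I_n).

Definition is_context : Prop := (exists a : A, True) /\ (exists b : B, True).

Definition normalized : Prop :=
  (forall a, (exists b1, R a b1 <> \bot) /\ (exists b2, R a b2 = \bot)) /\
  (forall b, (exists a1, R a1 b <> \bot) /\ (exists a2, R a2 b = \bot)).

Definition down (inf : (L -> Prop) -> L) (nw : 'I_n -> L -> L -> L)
  (f : A -> L) (b : B) : L :=
  inf (fun y => exists a : A, y = nw (sigma a b) (R a b) (f a)).

Definition phi (a : A) (x : L) : A -> L := fun a' => if a' == a then x else \bot.

Definition separable_subcontext (Y : A -> Prop) (X : B -> Prop) : Prop :=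
  (exists a, ~ Y a) /\ (exists b, ~ X b) /\
  (exists a, Y a) /\ (exists b, X b) /\
  (exists a b, Y a /\ X b /\ R a b <> \bot) /\
  (forall a b', Y a -> ~ X b' -> R a b' = \bot) /\
  (forall a' b, ~ Y a' -> X b -> R a' b = \bot).

Definition independent_decomposition (conj : 'I_n -> L -> L -> L)
  (Lam : Type) (AL : Lam -> A -> Prop) (BL : Lam -> B -> Prop) : Prop :=
  (exists l : Lam, True) /\
  (forall l, separable_subcontext (AL l) (BL l)) /\
  (forall l1 l2 a, l1 <> l2 -> AL l1 a -> AL l2 a -> False) /\
  (forall a, exists l, AL l a) /\
  (forall l1 l2 b, l1 <> l2 -> BL l1 b -> BL l2 b -> False) /\
  (forall b, exists l, BL l b) /\
  (forall l a b, ((~ AL l a /\ BL l b) \/ (AL l a /\ ~ BL l b)) ->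
     ~ has_zero_divisors (conj (sigma a b))).

End Defs.

(* Main.v *)
Require Import Defs.
From HB Require Import structures.
From mathcomp Require Import all_boot all_order.
Import Order.TTheory.
Local Open Scope order_scope.

Theorem lemma29 (d : Order.disp_t) (L : tbLatticeType d)
  (inf : (L -> Prop) -> L) (Hcomplete : complete_inf inf)
  (n : nat) (conj sw nw : 'I_n -> L -> L -> L)
  (Hadj : forall i, adjoint_triple (conj i) (sw i) (nw i))
  (Hunit : forall i x, conj i x \top = x /\ conj i \top x = x)
  (A : eqType) (B : Type) (R : A -> B -> L) (sigma : A -> B -> 'I_n)
  (Hctx : is_context A B)
  (Hnorm : normalized R)
  (Lam : Type) (AL : Lam -> A -> Prop) (BL : Lam -> B -> Prop)
  (Hdec : independent_decomposition R sigma conj AL BL)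
  (l : Lam) (a : A) (Ha : AL l a) (x : L) (Hx : x <> \bot) :
  forall b : B,
    (BL l b -> down R sigma inf nw (phi a x) b = nw (sigma a b) (R a b) x) /\
    (~ BL l b -> down R sigma inf nw (phi a x) b = \bot).
Proof.
have key : forall b, down R sigma inf nw (phi a x) b = nw (sigma a b) (R a b) x.
  move=> b; rewrite /down.
  set S := (fun y => _).
  have [H1 H2] := Hcomplete S.
  apply/eqP; rewrite eq_le; apply/andP; split.
    by apply: H1; exists a; rewrite /phi eqxx.
  apply: H2 => y [a' ->]; rewrite /phi.
  case: eqP => [->|_]; first by [].
  have [_ H] := Hadj (sigma a' b) \bot (nw (sigma a b) (R a b) x) (R a' b).
  apply/H.
  have [H3 _] := Hadj (sigma a' b) \bot (nw (sigma a b) (R a b) x) (R a' b).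
  by apply/H3; rewrite le0x.
move=> b; split => [_|nB]; first exact: key.
rewrite key.
have [_ [Hsep [_ [_ [_ [_ Hnz]]]]]] := Hdec.
have [_ [_ [_ [_ [_ [HR _]]]]]] := Hsep l.
rewrite (HR a b Ha nB).
set y := nw _ _ _.
have Hy : conj (sigma a b) x y <= \bot.
  have [_ H] := Hadj (sigma a b) x y \bot.
  by apply/H.
have Hy0 : conj (sigma a b) x y = \bot by apply/eqP; rewrite eq_le Hy le0x.
case: (eqVneq y \bot) => [//|yn].
exfalso; apply: (Hnz l a b (or_intror (Logic.conj Ha nB))).
by exists x, y; split => //; split => //; apply/eqP.
Qed.
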